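(* Let $I\subset\mathbb{R}$ be an open interval, $W\subset I$ a countable dense subset, $\mathrm{gr}\colon W\to\mathbb{N}$ a grading with finite fibers, $K>1$, and give the fractured interval $\check I$ the division metric with steepness $K$. Suppose that for every $\alpha>0$ there is $M>0$ with $\mathrm{gap}(r)\ge Mr^\alpha$ for all $r>0$. If $f$ is a Hölder function from $\check I$ to a metric space such that $f(w^L)=f(w^R)$ for all $w\in W$, then $f$ is constant.
   Context: The divided interval of $I$ at $W$ is $\hat I = \{w^{L}, \hat w, w^{R} : w\in W\}\sqcup (I\smallsetminus W)$, with $\pi\colon\hat I\to I$ sending $w^L,\hat w,w^R$ to $w$ and fixing $I\smallsetminus W$, totally ordered so that $\pi$ is order preserving and $w^L<\hat w<w^R$. For $a,b\in\hat I\cup\{\pm\infty\}$, $(a,b)=\{s: a<s<b\}$; basis intervals are the nonempty $(a,b)$ other than those with $a=w^L$ or $b=w^R$, and they generate the topology. The fractured interval is $\check I=\hat I\smallsetminus\{\hat w:w\in W\}$. The height of $\hat w$ is $K^{-\mathrm{gr}(w)}$, all other points have height $0$; the division metric is $d(a,b)=$ maximum height of points of $(a,b)\subset\hat I$ for $a<b$ in $\check I$. Let $W_{\ge r}=\{w\in W: K^{-\mathrm{gr}(w)}\ge r\}$ and $\mathrm{gap}(r)$ be the minimum Euclidean distance between distinct points of $W_{\ge r}$ (with $\mathrm{gap}(r)=+\infty$ if $W_{\ge r}$ has fewer than two points). Hölder means Hölder with some exponent $\nu>0$ with respect to $d$. *)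

(* Defs.v *)
From Stdlib Require Import Reals Lra ClassicalEpsilon List.
Open Scope R_scope.

(** An open interval of R: (lo, hi) with lo possibly -oo (None) and
    hi possibly +oo (None). *)
Definition is_open_interval (I : R -> Prop) : Prop :=
  exists lo hi : option R, forall x,
    I x <-> ((match lo with Some a => a < x | None => True end) /\
             (match hi with Some b => x < b | None => True end)).

Definition countable_set (W : R -> Prop) : Prop :=
  exists e : nat -> R, forall w, W w -> exists n, e n = w.

Definition dense_in (W I : R -> Prop) : Prop :=
  (forall w, W w -> I w) /\
  (forall x y, I x -> I y -> x < y -> exists w, W w /\ x < w /\ w < y).

Definition finite_fibers (W : R -> Prop) (gr : R -> nat) : Prop :=
  forall n : nat, exists l : list R, forall w, W w -> gr w = n -> In w l.

(** Points of the divided interval: w^L, \hat w, w^R (w in W) and x in I \ W. *)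
Inductive dpt : Type :=
| PL : R -> dpt
| PH : R -> dpt
| PR : R -> dpt
| PO : R -> dpt.

Definition proj (p : dpt) : R :=
  match p with PL w | PH w | PR w | PO w => w end.

(* tag giving w^L < \hat w < w^R; points of I \ W never share a projection
   with a point of W *)
Definition tag (p : dpt) : nat :=
  match p with PL _ => 0%nat | PH _ => 1%nat | PR _ => 2%nat | PO _ => 1%nat end.

Definition in_hat (I W : R -> Prop) (p : dpt) : Prop :=
  match p with
  | PL w | PH w | PR w => W w
  | PO x => I x /\ ~ W x
  end.

Definition in_check (I W : R -> Prop) (p : dpt) : Prop :=
  in_hat I W p /\ (forall w, p <> PH w).

Definition dlt (p q : dpt) : Prop :=
  proj p < proj q \/ (proj p = proj q /\ (tag p < tag q)%nat).

Definition height (K : R) (gr : R -> nat) (p : dpt) : R :=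
  match p with PH w => / (K ^ gr w) | _ => 0 end.

Definition is_max_height (I W : R -> Prop) (gr : R -> nat) (K : R)
    (a b : dpt) (r : R) : Prop :=
  (exists s, in_hat I W s /\ dlt a s /\ dlt s b /\ height K gr s = r) /\
  (forall s, in_hat I W s -> dlt a s -> dlt s b -> height K gr s <= r).

Definition div_dist (I W : R -> Prop) (gr : R -> nat) (K : R) (a b : dpt) : R :=
  epsilon (inhabits 0) (is_max_height I W gr K a b).

Definition is_metric {X : Type} (dist : X -> X -> R) : Prop :=
  (forall x y, 0 <= dist x y) /\
  (forall x y, dist x y = 0 <-> x = y) /\
  (forall x y, dist x y = dist y x) /\
  (forall x y z, dist x z <= dist x y + dist y z).

Definition holder_check (I W : R -> Prop) (gr : R -> nat) (K : R)
    {X : Type} (dist : X -> X -> R) (f : dpt -> X) : Prop :=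
  exists nu C : R, 0 < nu /\
    forall a b, in_check I W a -> in_check I W b -> dlt a b ->
      dist (f a) (f b) <= C * Rpower (div_dist I W gr K a b) nu.

(** gap(r) >= m, where gap(r) is the minimum distance between distinct points
    of W_{>= r} = {w in W : K^{-gr w} >= r} (+oo if fewer than two points) *)
Definition gap_ge (W : R -> Prop) (gr : R -> nat) (K r m : R) : Prop :=
  forall w1 w2, W w1 -> W w2 -> w1 <> w2 ->
    / (K ^ gr w1) >= r -> / (K ^ gr w2) >= r -> Rabs (w1 - w2) >= m.

(* Main.v *)
Require Import Defs.
From Stdlib Require Import Reals Lra Lia ZArith List Classical ClassicalEpsilon.
Open Scope R_scope.

Lemma list_min (P : R -> Prop) (k : R -> R) (l : list R) :
  (forall x, In x l -> ~ P x) \/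
  (exists x, In x l /\ P x /\ forall y, In y l -> P y -> k x <= k y).
Proof.
  induction l as [|a l IH].
  - left; intros x [].
  - destruct (classic (P a)) as [Pa|nPa].
    + destruct IH as [IH|[x [Hx [Px Hm]]]].
      * right; exists a; split; [left; auto|split; auto].
        intros y [<-|Hy] Py; [lra|exfalso; exact (IH y Hy Py)].
      * destruct (Rle_dec (k a) (k x)).
        -- right; exists a; split; [left; auto|split; auto].
           intros y [<-|Hy] Py; [lra|]. specialize (Hm y Hy Py); lra.
        -- right; exists x; split; [right; auto|split; auto].
           intros y [<-|Hy] Py; [lra|auto].
    + destruct IH as [IH|[x [Hx [Px Hm]]]].
      * left; intros y [<-|Hy]; auto.
      * right; exists x; split; [right; auto|split; auto].
        intros y [<-|Hy] Py; [contradiction|auto].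
Qed.

Lemma fibers_list (W : R -> Prop) (gr : R -> nat) :
  finite_fibers W gr -> forall N, exists l, forall w, W w -> (gr w <= N)%nat -> In w l.
Proof.
  intros H N; induction N as [|N IH].
  - destruct (H 0%nat) as [l Hl]; exists l; intros w Hw Hg; apply Hl; auto; lia.
  - destruct IH as [l Hl]; destruct (H (S N)) as [l2 Hl2]; exists (l ++ l2).
    intros w Hw Hg; apply in_or_app.
    destruct (Nat.eq_dec (gr w) (S N)); [right; auto|left; apply Hl; auto; lia].
Qed.

Lemma nat_above (x : R) : 0 <= x -> exists n : nat, x < INR n /\ INR n <= x + 1.
Proof.
  intros Hx. destruct (archimed x) as [H1 H2].
  assert (Hz : (0 < up x)%Z) by (apply lt_0_IZR; lra).
  exists (Z.to_nat (up x)). rewrite INR_IZR_INZ, Z2Nat.id by lia. lra.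
Qed.

Lemma dlt_trans p q r : dlt p q -> dlt q r -> dlt p r.
Proof.
  unfold dlt; intros [H|[H1 H2]] [H'|[H1' H2']].
  - left; lra.
  - left; lra.
  - left; lra.
  - right; split; [lra|lia].
Qed.

Lemma dlt_total I W a b : in_check I W a -> in_check I W b -> a = b \/ dlt a b \/ dlt b a.
Proof.
  intros [Ha Ha'] [Hb Hb']. unfold dlt.
  destruct (total_order_T (proj a) (proj b)) as [[H|H]|H]; [right; left; left; auto| |right; right; left; auto].
  destruct (lt_eq_lt_dec (tag a) (tag b)) as [[T|T]|T];
    [right; left; right; auto| |right; right; right; auto].
  destruct a, b; simpl in *; subst; try lia; auto;
  try (exfalso; eapply Ha'; reflexivity); try (exfalso; eapply Hb'; reflexivity).
Qed.

Lemma in_hat_I I W p : (forall w, W w -> I w) -> in_hat I W p -> I (proj p).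
Proof. intros H; destruct p; simpl; intuition. Qed.

Lemma hat_between I W a b : dense_in W I -> in_check I W a -> in_check I W b -> dlt a b ->
  exists w, W w /\ dlt a (PH w) /\ dlt (PH w) b.
Proof.
  intros [HWI HD] [Ha Ha'] [Hb Hb'] [H|[H1 H2]].
  - assert (Ia : I (proj a)) by (apply in_hat_I with W; auto).
    assert (Ib : I (proj b)) by (apply in_hat_I with W; auto).
    destruct (HD (proj a) (proj b) Ia Ib H) as [w [Hw [H1 H2]]].
    exists w; split; auto; split; left; auto.
  - destruct a, b; simpl in *; subst; try lia;
    try (exfalso; eapply Ha'; reflexivity); try (exfalso; eapply Hb'; reflexivity);
    try (destruct Ha; contradiction); try (destruct Hb; contradiction).
    exists r0; split; auto; split; right; simpl; split; auto.
Qed.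

Lemma invpow_pos K n : 1 < K -> 0 < / K ^ n.
Proof. intros; apply Rinv_0_lt_compat, pow_lt; lra. Qed.

Lemma invpow_le K m n : 1 < K -> (m <= n)%nat -> / K ^ n <= / K ^ m.
Proof. intros; apply Rinv_le_contravar; [apply pow_lt; lra|apply Rle_pow; auto; lra]. Qed.

Lemma max_exists I W gr K a b : dense_in W I -> finite_fibers W gr -> 1 < K ->
  in_check I W a -> in_check I W b -> dlt a b -> exists r, is_max_height I W gr K a b r.
Proof.
  intros HD HF HK Ha Hb Hab.
  destruct (hat_between I W a b HD Ha Hb Hab) as [w0 [Hw0 [H1 H2]]].
  destruct (fibers_list W gr HF (gr w0)) as [l Hl].
  destruct (list_min (fun w => W w /\ dlt a (PH w) /\ dlt (PH w) b) (fun w => INR (gr w)) l)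
    as [Hn|[x [Hx [[Wx [Ax Bx]] Hm]]]].
  - exfalso; apply (Hn w0); auto.
  - assert (Hx0 : (gr x <= gr w0)%nat) by (apply INR_le, Hm; auto).
    exists (/ K ^ gr x); split.
    + exists (PH x); simpl; auto.
    + intros s Hs As Bs; destruct s; simpl in *; try (left; apply invpow_pos; auto).
      apply invpow_le; auto.
      destruct (le_dec (gr r) (gr w0)).
      * apply INR_le, Hm; auto.
      * lia.
Qed.

Lemma dd_spec I W gr K a b : dense_in W I -> finite_fibers W gr -> 1 < K ->
  in_check I W a -> in_check I W b -> dlt a b -> is_max_height I W gr K a b (div_dist I W gr K a b).
Proof.
  intros; unfold div_dist; apply epsilon_spec; eapply max_exists; eauto.
Qed.

Lemma dd_bounds I W gr K a b N : dense_in W I -> finite_fibers W gr -> 1 < K ->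
  in_check I W a -> in_check I W b -> dlt a b ->
  (forall w, W w -> (gr w <= N)%nat -> dlt a (PH w) -> dlt (PH w) b -> False) ->
  0 < div_dist I W gr K a b <= / K ^ (S N).
Proof.
  intros HD HF HK Ha Hb Hab Hno.
  destruct (dd_spec I W gr K a b HD HF HK Ha Hb Hab) as [[s [Hs [As [Bs Hh]]]] Hup].
  split.
  - destruct (hat_between I W a b HD Ha Hb Hab) as [w0 [Hw0 [H1 H2]]].
    specialize (Hup (PH w0) Hw0 H1 H2); simpl in Hup.
    pose proof (invpow_pos K (gr w0) HK); lra.
  - rewrite <- Hh. pose proof (invpow_pos K (S N) HK).
    destruct s; unfold height; try lra.
    apply invpow_le; auto. simpl in Hs.
    destruct (le_dec (gr r) N); [exfalso; eapply Hno; eauto|lia].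
Qed.

Lemma Rpower_mono x y nu : 0 < x -> x <= y -> 0 < nu -> Rpower x nu <= Rpower y nu.
Proof.
  intros Hx Hxy Hnu; unfold Rpower.
  destruct Hxy as [Hlt|Heq]; [|subst; lra].
  left; apply exp_increasing. apply Rmult_lt_compat_l; auto. apply ln_increasing; auto.
Qed.

Lemma base_bound I W gr K X (dist : X -> X -> R) f nu C N :
  dense_in W I -> finite_fibers W gr -> 1 < K -> is_metric dist -> 0 < nu -> 0 <= C ->
  (forall a b, in_check I W a -> in_check I W b -> dlt a b ->
      dist (f a) (f b) <= C * Rpower (div_dist I W gr K a b) nu) ->
  forall a b, in_check I W a -> in_check I W b -> (dlt a b \/ a = b) ->
  (forall w, W w -> (gr w <= N)%nat -> dlt a (PH w) -> dlt (PH w) b -> False) ->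
  dist (f a) (f b) <= C * Rpower (/ K ^ (S N)) nu.
Proof.
  intros HD HF HK [Hd0 [Hdeq _]] Hnu HC Hhol a b Ha Hb [Hab|<-] Hno.
  - destruct (dd_bounds I W gr K a b N HD HF HK Ha Hb Hab Hno) as [P1 P2].
    eapply Rle_trans; [apply Hhol; auto|].
    apply Rmult_le_compat_l; auto. apply Rpower_mono; auto.
  - replace (dist (f a) (f a)) with 0 by (symmetry; apply Hdeq; auto).
    apply Rmult_le_pos; auto. unfold Rpower; left; apply exp_pos.
Qed.

Lemma lt_PL I W a w : in_check I W a -> dlt a (PH w) -> dlt a (PL w) \/ a = PL w.
Proof.
  intros [Ha Ha'] [H|[H1 H2]]; [left; left; auto|].
  destruct a; simpl in *; subst; try lia; auto.
Qed.

Lemma gt_PR I W b w : in_check I W b -> dlt (PH w) b -> dlt (PR w) b \/ b = PR w.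
Proof.
  intros [Hb Hb'] [H|[H1 H2]]; [left; left; auto|].
  destruct b; simpl in *; subst; try lia; auto;
  exfalso; eapply Hb'; reflexivity.
Qed.

Lemma chain I W gr K X (dist : X -> X -> R) f nu C N g :
  dense_in W I -> finite_fibers W gr -> 1 < K -> is_metric dist -> 0 < nu -> 0 <= C ->
  (forall a b, in_check I W a -> in_check I W b -> dlt a b ->
      dist (f a) (f b) <= C * Rpower (div_dist I W gr K a b) nu) ->
  (forall w, W w -> f (PL w) = f (PR w)) ->
  0 < g ->
  (forall w1 w2, W w1 -> W w2 -> (gr w1 <= N)%nat -> (gr w2 <= N)%nat -> w1 <> w2 ->
      g <= Rabs (w1 - w2)) ->
  forall n x a b, in_check I W a -> in_check I W b -> (dlt a b \/ a = b) ->
  (forall w, W w -> (gr w <= N)%nat -> dlt a (PH w) -> dlt (PH w) b ->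
     x <= w < x + INR n * g) ->
  dist (f a) (f b) <= (INR n + 1) * (C * Rpower (/ K ^ (S N)) nu).
Proof.
  intros HD HF HK Hdist Hnu HC Hhol HLR Hg Hsep.
  assert (HcN : 0 <= C * Rpower (/ K ^ (S N)) nu)
    by (apply Rmult_le_pos; auto; unfold Rpower; left; apply exp_pos).
  pose proof Hdist as [Hd0 [Hdeq [Hdsym Hdtri]]].
  destruct (fibers_list W gr HF N) as [Lh HLh].
  induction n as [|n IH]; intros x a b Ha Hb Hab Hin.
  - change (INR 0) with 0. replace ((0 + 1) * (C * Rpower (/ K ^ S N) nu)) with (C * Rpower (/ K ^ S N) nu) by ring. eapply base_bound; eauto.
    intros w Hw Hgw H1 H2; specialize (Hin w Hw Hgw H1 H2); simpl in Hin; lra.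
  - rewrite S_INR.
    destruct (list_min (fun w => W w /\ (gr w <= N)%nat /\ dlt a (PH w) /\ dlt (PH w) b) (fun w => w) Lh)
      as [Hn|[w [Hw [[Ww [Gw [Aw Bw]]] Hm]]]].
    + assert (Hno : forall w, W w -> (gr w <= N)%nat -> dlt a (PH w) -> dlt (PH w) b -> False)
        by (intros w Hw Hgw H1 H2; apply (Hn w); auto).
      eapply Rle_trans; [apply (base_bound I W gr K X dist f nu C N); auto|].
      pose proof (pos_INR n); nra.
    + assert (Inw := Hin w Ww Gw Aw Bw).
      assert (CL : in_check I W (PL w)) by (split; [exact Ww|intros z Hz; discriminate]).
      assert (CR : in_check I W (PR w)) by (split; [exact Ww|intros z Hz; discriminate]).
      eapply Rle_trans; [apply (Hdtri _ (f (PL w)) _)|].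
      assert (E1 : dist (f a) (f (PL w)) <= C * Rpower (/ K ^ (S N)) nu).
      { apply (base_bound I W gr K X dist f nu C N); auto.
        - destruct (lt_PL I W a w Ha Aw); auto.
        - intros w' Hw' Hgw' H1 H2.
          assert (w' < w) by (destruct H2 as [H2|[_ H2]]; simpl in *; [lra|lia]).
          assert (Bw' : dlt (PH w') b) by (eapply dlt_trans; [exact H2|]; eapply dlt_trans; [|exact Bw]; right; simpl; auto).
          assert (w <= w') by (apply Hm; auto).
          lra. }
      assert (E2 : dist (f (PR w)) (f b) <= (INR n + 1) * (C * Rpower (/ K ^ (S N)) nu)).
      { apply (IH (x + g)); auto.
        - destruct (gt_PR I W b w Hb Bw); auto.
        - intros w' Hw' Hgw' H1 H2.
          assert (w < w') by (destruct H1 as [H1|[_ H1]]; simpl in *; [lra|lia]).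
          assert (Aw' : dlt a (PH w')) by (eapply dlt_trans; [exact Aw|]; left; simpl; auto).
          destruct (Hin w' Hw' Hgw' Aw' H2).
          assert (Hs : g <= Rabs (w' - w)) by (apply Hsep; auto; lra).
          rewrite Rabs_right in Hs by lra. rewrite S_INR in *. destruct Inw. lra. }
      rewrite <- (HLR w Ww) in E2. lra.
Qed.

Lemma key (I W : R -> Prop) (gr : R -> nat) (K : R)
  (HWd : dense_in W I) (Hgr : finite_fibers W gr) (HK : 1 < K)
  (Hgap : forall alpha, 0 < alpha -> exists M, 0 < M /\
            forall r, 0 < r -> gap_ge W gr K r (M * Rpower r alpha))
  (X : Type) (dist : X -> X -> R) (Hdist : is_metric dist)
  (f : dpt -> X) nu C (Hnu : 0 < nu)
  (Hhol : forall a b, in_check I W a -> in_check I W b -> dlt a b ->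
      dist (f a) (f b) <= C * Rpower (div_dist I W gr K a b) nu)
  (HLR : forall w, W w -> f (PL w) = f (PR w)) :
  forall a b, in_check I W a -> in_check I W b -> dlt a b -> dist (f a) (f b) = 0.
Proof.
  intros a b Ha Hb Hab.
  pose proof Hdist as [Hd0 [Hdeq [Hdsym Hdtri]]].
  assert (HC : 0 <= C).
  { pose proof (Hhol a b Ha Hb Hab). pose proof (Hd0 (f a) (f b)).
    assert (0 < Rpower (div_dist I W gr K a b) nu) by (unfold Rpower; apply exp_pos).
    destruct (Rle_dec 0 C); auto. nra. }
  destruct (Hgap (nu/2)) as [M [HM HgM]]; [lra|].
  assert (HlnK : 0 < ln K) by (rewrite <- ln_1; apply ln_increasing; lra).
  set (L := proj b - proj a).
  assert (HL : 0 <= L) by (unfold L; destruct Hab as [H|[H _]]; lra).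
  set (e := fun N : nat => exp (- (nu/2) * INR N * ln K)).
  assert (He1 : forall N, 0 < e N <= 1).
  { intros N; split; [apply exp_pos|]. unfold e. rewrite <- exp_0.
    pose proof (pos_INR N). destruct (Rle_lt_or_eq_dec 0 (INR N)) as [Hp|Hp]; auto.
    - left; apply exp_increasing. assert (0 < nu/2 * INR N * ln K).
      { apply Rmult_lt_0_compat; auto. apply Rmult_lt_0_compat; lra. }
      lra.
    - rewrite <- Hp. right; f_equal; ring. }
  set (A := L * C / M + 2 * C).
  assert (HA : 0 <= A).
  { unfold A. assert (0 <= L * C / M) by (apply Rmult_le_pos; [apply Rmult_le_pos; auto|left; apply Rinv_0_lt_compat; auto]). lra. }
  assert (Hbound : forall N, dist (f a) (f b) <= A * e N).
  { intros N.
    assert (HR : Rpower (/ K ^ N) (nu/2) = e N).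
    { unfold Rpower, e. rewrite ln_Rinv by (apply pow_lt; lra). rewrite ln_pow by lra.
      f_equal; ring. }
    set (g := M * e N).
    assert (Hg : 0 < g) by (unfold g; apply Rmult_lt_0_compat; auto; apply He1).
    assert (Hsep : forall w1 w2, W w1 -> W w2 -> (gr w1 <= N)%nat -> (gr w2 <= N)%nat -> w1 <> w2 ->
      g <= Rabs (w1 - w2)).
    { intros w1 w2 H1 H2 G1 G2 Hne.
      pose proof (HgM (/ K ^ N) (invpow_pos K N HK) w1 w2 H1 H2 Hne) as Hq.
      rewrite HR in Hq. unfold g.
      apply Rge_le, Hq; apply Rle_ge, invpow_le; auto. }
    destruct (nat_above (L / g)) as [n [Hn1 Hn2]].
    { apply Rmult_le_pos; auto. left; apply Rinv_0_lt_compat; auto. }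
    assert (HnL : L < INR n * g).
    { apply (Rmult_lt_compat_r g) in Hn1; auto. unfold Rdiv in Hn1.
      rewrite Rmult_assoc, Rinv_l, Rmult_1_r in Hn1 by lra. lra. }
    assert (Hch := chain I W gr K X dist f nu C N g HWd Hgr HK Hdist Hnu HC Hhol HLR Hg Hsep
                  n (proj a) a b Ha Hb (or_introl Hab)).
    assert (Hc2 : dist (f a) (f b) <= (INR n + 1) * (C * Rpower (/ K ^ S N) nu)).
    { apply Hch. intros w Hw Hgw H1 H2.
      assert (proj a <= w) by (destruct H1 as [H1|[H1 _]]; simpl in *; lra).
      assert (w <= proj b) by (destruct H2 as [H2|[H2 _]]; simpl in *; lra).
      unfold L in HnL. lra. }
    assert (HP : Rpower (/ K ^ S N) nu <= e N * e N).
    { unfold Rpower, e. rewrite <- exp_plus.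
      rewrite ln_Rinv by (apply pow_lt; lra). rewrite ln_pow by lra. rewrite S_INR.
      assert (0 <= nu * ln K) by (apply Rmult_le_pos; lra).
      destruct (Rle_lt_or_eq_dec _ _ H) as [Hp|Hp].
      - left; apply exp_increasing. nra.
      - right; f_equal. nra. }
    assert (HP0 : 0 <= Rpower (/ K ^ S N) nu) by (unfold Rpower; left; apply exp_pos).
    destruct (He1 N) as [He0 He1'].
    assert (Hq : (INR n + 1) * (C * Rpower (/ K ^ S N) nu) <= (L / g + 2) * (C * (e N * e N))).
    { pose proof (pos_INR n). assert (0 <= C * Rpower (/ K ^ S N) nu) by (apply Rmult_le_pos; auto).
      apply Rmult_le_compat; try lra.
      apply Rmult_le_compat_l; auto. }
    assert (Hq2 : (L / g + 2) * (C * (e N * e N)) = L * C / M * e N + 2 * C * e N * e N).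
    { unfold g. field. split; lra. }
    assert (2 * C * e N * e N <= 2 * C * e N).
    { assert (0 <= 2 * C * e N) by (apply Rmult_le_pos; lra).
      apply (Rmult_le_compat_l (2 * C * e N)) in He1'; lra. }
    unfold A. lra. }
  destruct (Hd0 (f a) (f b)) as [Hpos|Hz]; [|auto].
  exfalso.
  set (d := dist (f a) (f b)) in *.
  set (t := ln ((A + 1) / d) / (nu / 2 * ln K)).
  destruct (nat_above (Rmax 0 t)) as [N [HN _]]; [apply Rmax_l|].
  assert (HtN : t < INR N) by (pose proof (Rmax_r 0 t); lra).
  assert (Hk : 0 < nu / 2 * ln K) by (apply Rmult_lt_0_compat; lra).
  assert (Ht : ln ((A + 1) / d) < nu / 2 * ln K * INR N).
  { assert (Htk : t * (nu / 2 * ln K) = ln ((A + 1) / d)) by (unfold t; field; lra).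
    rewrite <- Htk. apply (Rmult_lt_compat_l (nu / 2 * ln K)) in HtN; auto. lra. }
  assert (HeN : e N < d / (A + 1)).
  { unfold e. rewrite <- (exp_ln (d / (A + 1))) by (apply Rdiv_lt_0_compat; lra).
    apply exp_increasing.
    replace (d / (A + 1)) with (/ ((A + 1) / d)) by (field; lra).
    rewrite ln_Rinv by (apply Rdiv_lt_0_compat; lra). lra. }
  specialize (Hbound N).
  assert (HeN2 : (A + 1) * e N < d).
  { apply (Rmult_lt_compat_l (A + 1)) in HeN; [|lra].
    replace ((A + 1) * (d / (A + 1))) with d in HeN by (field; lra). exact HeN. }
  pose proof (He1 N). fold d in Hbound. nra.
Qed.

Theorem corollary3p11
  (I W : R -> Prop) (gr : R -> nat) (K : R)
  (HI : is_open_interval I) (HWc : countable_set W) (HWd : dense_in W I)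
  (Hgr : finite_fibers W gr) (HK : 1 < K)
  (Hgap : forall alpha, 0 < alpha -> exists M, 0 < M /\
            forall r, 0 < r -> gap_ge W gr K r (M * Rpower r alpha))
  (X : Type) (dist : X -> X -> R) (Hdist : is_metric dist)
  (f : dpt -> X)
  (Hf : holder_check I W gr K dist f)
  (HLR : forall w, W w -> f (PL w) = f (PR w)) :
  forall a b, in_check I W a -> in_check I W b -> f a = f b.
Proof.
  intros a b Ha Hb.
  destruct Hf as [nu [C [Hnu Hhol]]].
  pose proof Hdist as [Hd0 [Hdeq [Hdsym Hdtri]]].
  destruct (dlt_total I W a b Ha Hb) as [->|[H|H]]; auto.
  - apply Hdeq. eapply key; eauto.
  - symmetry; apply Hdeq. eapply key; eauto.
Qed.
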